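(* For $0<p<1$ and $0<\varepsilon<1$, $$\frac{1}{1+\frac{1}{p\log(1/\varepsilon)}}\le\min\Big\{1-\varepsilon,\;p\log\frac1\varepsilon\Big\}\le\frac{2}{1+\frac{1}{p\log(1/\varepsilon)}}.$$
   Context: $\log$ is the natural logarithm. *)

(* Defs.v *)
From Stdlib Require Import Reals.

(* Main.v *)
Require Import Defs.
From Stdlib Require Import Reals Lra.
Open Scope R_scope.

Theorem lemma2 (p eps : R) (hp0 : 0 < p) (hp1 : p < 1)
  (he0 : 0 < eps) (he1 : eps < 1) :
  1 / (1 + 1 / (p * ln (1 / eps))) <= Rmin (1 - eps) (p * ln (1 / eps)) /\
  Rmin (1 - eps) (p * ln (1 / eps)) <= 2 / (1 + 1 / (p * ln (1 / eps))).
Proof.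
  set (y := 1 / eps).
  assert (hx : 1 < y).
  { unfold y. apply (Rmult_lt_reg_r eps); auto. field_simplify; lra. }
  assert (hxe : y * eps = 1) by (unfold y; field; lra).
  assert (hL : 0 < ln y).
  { rewrite <- ln_1. apply ln_increasing; lra. }
  assert (hle : 1 + ln y <= y).
  { pose proof (exp_ineq1_le (ln y)). rewrite exp_ln in H; lra. }
  set (L := ln y) in *.
  assert (ha : 0 < p * L) by nra.
  set (a := p * L) in *.
  replace (1 / (1 + 1 / a)) with (a / (1 + a)) by (field; lra).
  replace (2 / (1 + 1 / a)) with (2 * a / (1 + a)) by (field; lra).
  assert (hea : eps * (1 + a) <= 1).
  { assert (a <= L) by (unfold a; nra). nra. }
  split.
  - apply Rmin_glb.
    + apply (Rmult_le_reg_r (1 + a)); [lra|]. unfold Rdiv. rewrite Rmult_assoc, Rinv_l; lra.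
    + apply (Rmult_le_reg_r (1 + a)); [lra|]. unfold Rdiv. rewrite Rmult_assoc, Rinv_l; nra.
  - destruct (Rle_dec a 1).
    + eapply Rle_trans; [apply Rmin_r|].
      apply (Rmult_le_reg_r (1 + a)); [lra|]. unfold Rdiv. rewrite Rmult_assoc, Rinv_l; nra.
    + eapply Rle_trans; [apply Rmin_l|].
      apply (Rmult_le_reg_r (1 + a)); [lra|]. unfold Rdiv. rewrite Rmult_assoc, Rinv_l; nra.
Qed.
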